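(* Let $D$ be a square-free integer, let $\mathbb{Z}[\sqrt{D}]$ denote the ring of integers of $\mathbb{Q}(\sqrt{D})$, and let $p$ be a prime integer which is irreducible but not prime in $\mathbb{Z}[\sqrt{D}]$. For any $z\in\mathbb{Z}[\sqrt{D}]$, we have $z\in I_p(D)$ if and only if the ideal $\langle p,z\rangle$ of $\mathbb{Z}[\sqrt{D}]$ is non-principal.
   Context: Here $\mathbb{Z}[\sqrt{D}]=\{a+b\sqrt{D}:a,b\in\mathbb{Z}\}$ if $D\equiv 2,3 \pmod 4$ and $\mathbb{Z}[\sqrt{D}]=\{\frac{a+b\sqrt{D}}{2}:a,b\in\mathbb{Z},\ a\equiv b \pmod 2\}$ if $D\equiv 1\pmod 4$. $\langle a_1,\dots,a_k\rangle$ denotes the ideal generated by $a_1,\dots,a_k$. $I_p(D)$ is the set of all non-unit $z\in\mathbb{Z}[\sqrt{D}]$ such that $z\notin\langle p\rangle$ but there exists $m\in\mathbb{Z}[\sqrt{D}]$ with $m\notin\langle p\rangle$ and $zm\in\langle p\rangle$. *)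

(* Defs.v *)
From mathcomp Require Import all_boot all_order all_algebra.
Set Implicit Arguments. Unset Strict Implicit. Unset Printing Implicit Defensive.
Import Order.TTheory GRing.Theory Num.Theory.
Local Open Scope ring_scope.

(* Elements of the ring of integers of Q(sqrt D) are encoded as pairs (a, b)
   of integers standing for (a + b sqrt D)/2, subject to:
   - a = b (mod 2)        if D = 1 (mod 4);
   - a and b both even    if D = 2, 3 (mod 4)  (i.e. the element a/2 + (b/2) sqrt D). *)
Definition elt := (int * int)%type.

Definition inO (D : int) (x : elt) : bool :=
  if (D %% 4)%Z == 1 then ((x.1 - x.2) %% 2)%Z == 0
  else ((2 %| x.1)%Z && (2 %| x.2)%Z).

(* ((a + b sqrt D)/2) * ((c + d sqrt D)/2)
     = ((ac + bdD)/2 + ((ad + bc)/2) sqrt D) / 2 ; divisions exact on inO. *)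
Definition mulO (D : int) (x y : elt) : elt :=
  (((x.1 * y.1 + x.2 * y.2 * D) %/ 2)%Z, ((x.1 * y.2 + x.2 * y.1) %/ 2)%Z).
Definition addO (x y : elt) : elt := (x.1 + y.1, x.2 + y.2).
Definition zeroO : elt := (0, 0).
Definition oneO : elt := (2, 0).
Definition intO (n : int) : elt := (2 * n, 0).

Definition squarefree (D : int) : Prop :=
  forall d : nat, (d * d %| `|D|)%N -> d = 1%N.

Definition unitO (D : int) (u : elt) : Prop :=
  inO D u /\ exists v, inO D v /\ mulO D u v = oneO.

Definition dvdO (D : int) (x y : elt) : Prop :=
  exists k, inO D k /\ y = mulO D x k.

Definition irreducibleO (D : int) (p : elt) : Prop :=
  inO D p /\ p <> zeroO /\ ~ unitO D p /\
  forall a b, inO D a -> inO D b -> p = mulO D a b -> unitO D a \/ unitO D b.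

Definition primeO (D : int) (p : elt) : Prop :=
  inO D p /\ p <> zeroO /\ ~ unitO D p /\
  forall a b, inO D a -> inO D b -> dvdO D p (mulO D a b) -> dvdO D p a \/ dvdO D p b.

Definition ideal2 (D : int) (x y : elt) (w : elt) : Prop :=
  exists r s, inO D r /\ inO D s /\ w = addO (mulO D r x) (mulO D s y).

Definition principalO (D : int) (I : elt -> Prop) : Prop :=
  exists g, inO D g /\ forall w, inO D w -> (I w <-> dvdO D g w).

Definition Ip (D : int) (p : elt) (z : elt) : Prop :=
  inO D z /\ ~ unitO D z /\ ~ dvdO D p z /\
  exists m, inO D m /\ ~ dvdO D p m /\ dvdO D p (mulO D z m).

(* Main.v *)
Require Import Defs.
From HB Require Import structures.
From mathcomp Require Import all_boot all_order all_algebra zify ring.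
Import GRing.Theory Num.Theory.
Set Implicit Arguments. Unset Strict Implicit. Unset Printing Implicit Defensive.
Local Open Scope ring_scope.

Lemma inO_1 D x : (D %% 4)%Z == 1 -> inO D x ->
  exists s, x.1 = x.2 + s * 2.
Proof.
rewrite /inO => -> /eqP h; exists ((x.1 - x.2) %/ 2)%Z.
have := divz_eq (x.1 - x.2) 2; rewrite h; lia.
Qed.

Lemma D_1 D : (D %% 4)%Z == 1 -> exists k, D = k * 4 + 1.
Proof. move=> /eqP h; exists (D %/ 4)%Z; have := divz_eq D 4; rewrite h; lia. Qed.

Lemma inO_2 D x : (D %% 4)%Z != 1 -> inO D x ->
  exists a b, x = (a * 2, b * 2).
Proof.
rewrite /inO => /negPf -> /andP [/dvdzP [a ha] /dvdzP [b hb]].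
by exists a, b; case: x ha hb => /= ? ? -> ->.
Qed.

Lemma inO_1E D x : (D %% 4)%Z == 1 -> (exists s, x.1 = x.2 + s * 2) -> inO D x.
Proof.
rewrite /inO => -> [s ->]; rewrite (_ : x.2 + s * 2 - x.2 = s * 2); last lia.
by rewrite modzMl.
Qed.

Lemma inO_2E D x : (D %% 4)%Z != 1 -> (exists a b, x = (a * 2, b * 2)) -> inO D x.
Proof.
rewrite /inO => /negPf -> [a [b ->]] /=.
by apply/andP; split; apply/dvdzP; [exists a | exists b].
Qed.

Lemma even1 D x y : inO D x -> inO D y -> (2 %| x.1 * y.1 + x.2 * y.2 * D)%Z.
Proof.
move=> hx hy; case: (boolP ((D %% 4)%Z == 1)) => hD.
  have [k ->] := D_1 hD; have [s hs] := inO_1 hD hx; have [t ht] := inO_1 hD hy.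
  rewrite hs ht; apply/dvdzP.
  exists (x.2 * y.2 + x.2 * t + s * y.2 + 2 * s * t + 2 * k * x.2 * y.2); ring.
have [a [b ->]] := inO_2 hD hx; have [c [d ->]] := inO_2 hD hy.
apply/dvdzP; exists (2 * a * c + 2 * b * d * D) => /=; ring.
Qed.

Lemma even2 D x y : inO D x -> inO D y -> (2 %| x.1 * y.2 + x.2 * y.1)%Z.
Proof.
move=> hx hy; case: (boolP ((D %% 4)%Z == 1)) => hD.
  have [s hs] := inO_1 hD hx; have [t ht] := inO_1 hD hy.
  rewrite hs ht; apply/dvdzP.
  exists (x.2 * y.2 + s * y.2 + x.2 * t); ring.
have [a [b ->]] := inO_2 hD hx; have [c [d ->]] := inO_2 hD hy.
apply/dvdzP; exists (2 * a * d + 2 * b * c) => /=; ring.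
Qed.

Lemma m2_1 D x y : inO D x -> inO D y -> 2 * (mulO D x y).1 = x.1 * y.1 + x.2 * y.2 * D.
Proof. by move=> hx hy; rewrite /= mulrC divzK // (even1 hx hy). Qed.

Lemma m2_2 D x y : inO D x -> inO D y -> 2 * (mulO D x y).2 = x.1 * y.2 + x.2 * y.1.
Proof. by move=> hx hy; rewrite /= mulrC divzK // (even2 hx hy). Qed.

Lemma inO_mul D x y : inO D x -> inO D y -> inO D (mulO D x y).
Proof.
move=> hx hy; move: (m2_1 hx hy) (m2_2 hx hy); case: (mulO D x y) => e f /= h1 h2.
case: (boolP ((D %% 4)%Z == 1)) => hD.
  have [k hk] := D_1 hD; have [s hs] := inO_1 hD hx; have [t ht] := inO_1 hD hy.
  apply: inO_1E => //; exists (s * t + k * x.2 * y.2).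
  rewrite hs ht hk in h1 h2; rewrite /=; lia.
have [a [b hab]] := inO_2 hD hx; have [c [d hcd]] := inO_2 hD hy.
rewrite hab hcd /= in h1 h2.
apply: inO_2E => //; exists (a * c + b * d * D), (a * d + b * c).
congr pair; lia.
Qed.

Lemma inO_add D x y : inO D x -> inO D y -> inO D (addO x y).
Proof.
move=> hx hy; case: (boolP ((D %% 4)%Z == 1)) => hD.
  have [s hs] := inO_1 hD hx; have [t ht] := inO_1 hD hy.
  apply: inO_1E => //; exists (s + t); rewrite /= hs ht; ring.
have [a [b ->]] := inO_2 hD hx; have [c [d ->]] := inO_2 hD hy.
apply: inO_2E => //; exists (a + c), (b + d); rewrite /addO /=; congr pair; ring.
Qed.

Definition oppO (x : elt) : elt := (- x.1, - x.2).
Definition conjO (x : elt) : elt := (x.1, - x.2).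

Lemma inO_opp D x : inO D x -> inO D (oppO x).
Proof.
move=> hx; case: (boolP ((D %% 4)%Z == 1)) => hD.
  have [s hs] := inO_1 hD hx.
  apply: inO_1E => //; exists (- s); rewrite /= hs; ring.
have [a [b ->]] := inO_2 hD hx.
apply: inO_2E => //; exists (- a), (- b); rewrite /oppO /=; congr pair; ring.
Qed.

Lemma inO_conj D x : inO D x -> inO D (conjO x).
Proof.
move=> hx; case: (boolP ((D %% 4)%Z == 1)) => hD.
  have [s hs] := inO_1 hD hx.
  apply: inO_1E => //; exists (s + x.2); rewrite /= hs; ring.
have [a [b ->]] := inO_2 hD hx.
apply: inO_2E => //; exists a, (- b); rewrite /conjO /=; congr pair; ring.
Qed.

Lemma inO_int D n : inO D (intO n).
Proof.
case: (boolP ((D %% 4)%Z == 1)) => hD.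
  apply: inO_1E => //; exists n; rewrite /=; ring.
apply: inO_2E => //; exists n, 0; rewrite /intO; congr pair; ring.
Qed.

Lemma eq_elt (x y : elt) : 2 * x.1 = 2 * y.1 -> 2 * x.2 = 2 * y.2 -> x = y.
Proof. case: x y => [a b] [c d] /= h1 h2; congr pair; lia. Qed.


Lemma q1 D x y : inO D x -> inO D y ->
  (mulO D x y).1%:Q = (x.1%:Q * y.1%:Q + x.2%:Q * y.2%:Q * D%:Q) / 2.
Proof.
move=> hx hy; have := congr1 (fun n : int => n%:Q) (m2_1 hx hy).
rewrite /= ?intrD ?intrM => <-; field; try done.
Qed.

Lemma q2 D x y : inO D x -> inO D y ->
  (mulO D x y).2%:Q = (x.1%:Q * y.2%:Q + x.2%:Q * y.1%:Q) / 2.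
Proof.
move=> hx hy; have := congr1 (fun n : int => n%:Q) (m2_2 hx hy).
rewrite /= ?intrD ?intrM => <-; field; try done.
Qed.

Lemma eqQ (x y : elt) : x.1%:Q = y.1%:Q -> x.2%:Q = y.2%:Q -> x = y.
Proof. case: x y => [a b] [c d] /= /intr_inj -> /intr_inj ->. by []. Qed.

Lemma mulOC D x y : mulO D x y = mulO D y x.
Proof. rewrite /mulO; congr pair; congr (_ %/ _)%Z; ring. Qed.

Lemma mul1O D x : mulO D oneO x = x.
Proof.
case: x => a b; rewrite /mulO /=; congr pair.
  by rewrite mul0r mul0r addr0 mulKz.
by rewrite mul0r addr0 mulKz.
Qed.

Lemma mulOA D x y z : inO D x -> inO D y -> inO D z ->
  mulO D x (mulO D y z) = mulO D (mulO D x y) z.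
Proof.
move=> hx hy hz; have hxy := inO_mul hx hy; have hyz := inO_mul hy hz.
apply: eqQ; rewrite ?q1 ?q2 //=; rewrite ?q1 ?q2 //; rewrite ?intrD ?intrM; field; try done.
Qed.

Lemma mulODl D x y z : inO D x -> inO D y -> inO D z ->
  mulO D (addO x y) z = addO (mulO D x z) (mulO D y z).
Proof.
move=> hx hy hz; have hxy := inO_add hx hy.
have a1 : forall a b : elt, (addO a b).1 = a.1 + b.1 by [].
have a2 : forall a b : elt, (addO a b).2 = a.2 + b.2 by [].
apply: eqQ; rewrite ?q1 ?q2 // !a1 !a2 ?intrD ?q1 ?q2 //; field; try done.
Qed.

Lemma inO0 D : inO D zeroO.
Proof.
case: (boolP ((D %% 4)%Z == 1)) => hD.
  by apply: inO_1E => //; exists 0.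
by apply: inO_2E => //; exists 0, 0.
Qed.

Lemma inO1 D : inO D oneO.
Proof. exact: (inO_int D 1). Qed.

Definition OT (D : int) := {x : elt | inO D x}.
HB.instance Definition _ D := Choice.on (OT D).

Definition addT D (a b : OT D) : OT D := exist _ (addO (val a) (val b)) (inO_add (valP a) (valP b)).
Definition oppT D (a : OT D) : OT D := exist _ (oppO (val a)) (inO_opp (valP a)).
Definition zeroT D : OT D := exist _ zeroO (inO0 D).
Definition mulT D (a b : OT D) : OT D := exist _ (mulO D (val a) (val b)) (inO_mul (valP a) (valP b)).
Definition oneT D : OT D := exist _ oneO (inO1 D).

Lemma addTA D : associative (@addT D).
Proof. move=> a b c; apply: val_inj; rewrite /= /addO /=; congr pair; ring. Qed.
Lemma addTC D : commutative (@addT D).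
Proof. move=> a b; apply: val_inj; rewrite /= /addO /=; congr pair; ring. Qed.
Lemma add0T D : left_id (zeroT D) (@addT D).
Proof. move=> a; apply: val_inj; case: a => [[u v] h]; rewrite /= /addO /=; congr pair; ring. Qed.
Lemma addNT D : left_inverse (zeroT D) (@oppT D) (@addT D).
Proof. move=> a; apply: val_inj; rewrite /= /addO /=; congr pair; ring. Qed.

HB.instance Definition _ D := GRing.isZmodule.Build (OT D) (@addTA D) (@addTC D) (@add0T D) (@addNT D).

Lemma mulTA D : associative (@mulT D).
Proof. move=> a b c; apply: val_inj; rewrite /= mulOA //; exact: valP. Qed.
Lemma mulTC D : commutative (@mulT D).
Proof. move=> a b; apply: val_inj; rewrite /= mulOC //. Qed.
Lemma mul1T D : left_id (oneT D) (@mulT D).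
Proof. move=> a; apply: val_inj; rewrite /= mul1O //. Qed.
Lemma mulTDl D : left_distributive (@mulT D) (@addT D).
Proof. move=> a b c; apply: val_inj; rewrite /= mulODl //; exact: valP. Qed.
Lemma oneT_neq0 D : oneT D != zeroT D.
Proof. by apply/eqP => /(congr1 val). Qed.

HB.instance Definition _ D := GRing.Zmodule_isComNzRing.Build (OT D) (@mulTA D) (@mulTC D) (@mul1T D) (@mulTDl D) (@oneT_neq0 D).


Lemma mul0O D x : mulO D zeroO x = zeroO.
Proof. by rewrite /mulO /= !mul0r addr0. Qed.
Lemma addO0 x : addO x zeroO = x.
Proof. by case: x => a b; rewrite /addO /= !addr0. Qed.

Lemma conjK x : conjO (conjO x) = x.
Proof. by case: x => a b; rewrite /conjO /= opprK. Qed.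
Lemma conj_int n : conjO (intO n) = intO n.
Proof. by rewrite /conjO /intO /= oppr0. Qed.
Lemma conjO_mul D x y : inO D x -> inO D y ->
  conjO (mulO D x y) = mulO D (conjO x) (conjO y).
Proof.
move=> hx hy; have hcx := inO_conj hx; have hcy := inO_conj hy.
have c1 : forall a : elt, (conjO a).1 = a.1 by [].
have c2 : forall a : elt, (conjO a).2 = - a.2 by [].
apply: eqQ; rewrite ?c1 ?c2 ?intrN ?q1 ?q2 // ?c1 ?c2 ?intrN; field; try done.
Qed.
Lemma intO_mul D a b : mulO D (intO a) (intO b) = intO (a * b).
Proof.
apply: eqQ; rewrite ?q1 ?q2 /= ?intrM; try exact: inO_int. all: rewrite ?intr0; field; try done.
Qed.
Lemma intO_add a b : addO (intO a) (intO b) = intO (a + b).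
Proof. rewrite /addO /intO /=; congr pair; ring. Qed.

Lemma normO D x : inO D x -> exists N, mulO D x (conjO x) = intO N.
Proof.
move=> hx; have hcx := inO_conj hx.
move: (m2_1 hx hcx) (m2_2 hx hcx); rewrite /intO.
case: (mulO D x (conjO x)) => e f /= h1 h2.
case: (boolP ((D %% 4)%Z == 1)) => hD.
  have [k hk] := D_1 hD; have [s hs] := inO_1 hD hx.
  rewrite hs hk in h1 h2.
  exists (x.2 * s + s * s - k * x.2 * x.2); congr pair; lia.
have [a [b hab]] := inO_2 hD hx.
rewrite hab /= in h1 h2.
exists (a * a - b * b * D); congr pair; lia.
Qed.

Lemma lift D (a b : OT D) : a = b -> val a = val b.
Proof. by move=> ->. Qed.

Unset Implicit Arguments.

Theorem proposition2p1 (D : int) (p : nat) :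
  squarefree D -> D != 1 -> prime p ->
  irreducibleO D (intO p%:Z) -> ~ primeO D (intO p%:Z) ->
  forall z : elt, inO D z ->
    (Ip D (intO p%:Z) z <-> ~ principalO D (ideal2 D (intO p%:Z) z)).
Proof.
move=> _ _ pr irr _ z hz.
set P := intO p%:Z.
have hP : inO D P := inO_int D _.
have [_ [_ [_ irrP]]] := irr.
have id1 : forall x y, inO D x -> inO D y -> ideal2 D x y x.
  move=> x y hx hy; exists oneO, zeroO; split; first exact: inO1.
  by split; [exact: inO0 | rewrite mul0O addO0 mul1O].
have id2 : forall x y, inO D x -> inO D y -> ideal2 D x y y.
  move=> x y hx hy; exists zeroO, oneO; split; first exact: inO0.
  by split; [exact: inO1 | rewrite mul0O mul1O /addO /= !add0r; case: y {hy}].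
pose Z : OT D := exist _ z hz.
pose PP : OT D := exist _ P hP.
split.
- move=> [_ [nu [ndz [m [hm [ndm [c [hc hzm]]]]]]]] [g [hg H]].
  have [k [hk ePk]] := (H P hP).1 (id1 _ _ hP hz).
  have [t [ht ezt]] := (H z hz).1 (id2 _ _ hP hz).
  pose G : OT D := exist _ g hg; pose K : OT D := exist _ k hk.
  pose T : OT D := exist _ t ht; pose M : OT D := exist _ m hm.
  pose C : OT D := exist _ c hc.
  have eZM : Z * M = PP * C by apply: val_inj.
  have ePK : PP = G * K by apply: val_inj.
  have eZT : Z = G * T by apply: val_inj.
  case: (irrP g k hg hk ePk) => [[_ [v [hv egv]]] | [_ [v [hv ekv]]]].
  + pose V : OT D := exist _ v hv.
    have eGV : G * V = 1 by apply: val_inj.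
    have [r [s [hr [hs eg]]]] : ideal2 D P z g.
      apply: (H g hg).2; exists oneO; split; first exact: inO1.
      by rewrite mulOC mul1O.
    pose R : OT D := exist _ r hr; pose S : OT D := exist _ s hs.
    have eG : G = R * PP + S * Z by apply: val_inj.
    apply: ndm; exists (val (V * R * M + V * S * C)); split; first exact: valP.
    apply: (lift (a := M) (b := PP * (V * R * M + V * S * C))).
    rewrite -[M in LHS]mul1r -eGV eG.
    apply/eqP; rewrite -subr_eq0.
    rewrite (_ : _ - _ = V * S * (Z * M - PP * C)); last by ring.
    by rewrite eZM subrr mulr0.
  + pose V : OT D := exist _ v hv.
    have eKV : K * V = 1 by apply: val_inj.
    apply: ndz; exists (val (V * T)); split; first exact: valP.
    apply: (lift (a := Z) (b := PP * (V * T))).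
    rewrite ePK eZT -[G * T]mulr1 -eKV; ring.
- move=> np.
  have ndz : ~ dvdO D P z.
    move=> [c [hc ezc]]; apply: np; exists P; split => // w hw.
    pose C : OT D := exist _ c hc; pose W : OT D := exist _ w hw.
    have eZ : Z = PP * C by apply: val_inj.
    split.
      move=> [r [s [hr [hs ew]]]].
      pose R : OT D := exist _ r hr; pose S : OT D := exist _ s hs.
      have eW : W = R * PP + S * Z by apply: val_inj.
      exists (val (R + S * C)); split; first exact: valP.
      apply: (lift (a := W) (b := PP * (R + S * C))).
      rewrite eW eZ; ring.
    move=> [k [hk ew]]; pose K : OT D := exist _ k hk.
    have eW : W = PP * K by apply: val_inj.
    exists k, zeroO; split => //; split; first exact: inO0.
    apply: (lift (a := W) (b := K * PP + 0 * Z)).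
    rewrite eW; ring.
  have nuz : ~ unitO D z.
    move=> [_ [v [hv ezv]]]; apply: np; exists oneO; split; first exact: inO1.
    move=> w hw; pose W : OT D := exist _ w hw; pose V : OT D := exist _ v hv.
    have eZV : Z * V = 1 by apply: val_inj.
    split.
      by move=> _; exists w; split => //; rewrite mul1O.
    move=> _; exists zeroO, (val (W * V)); split; first exact: inO0.
    split; first exact: valP.
    apply: (lift (a := W) (b := 0 * PP + (W * V) * Z)).
    rewrite -[W in LHS]mulr1 -eZV; ring.
  split => //; split => //; split => //.
  have [N eN] := normO hz.
  have hcz := inO_conj hz.
  case: (boolP ((p%:Z %| N)%Z)) => hdiv.
  + have [c ec] := dvdzP hdiv.
    exists (conjO z); split => //; split.
      move=> [k [hk ek]]; apply: ndz; exists (conjO k); split; first exact: inO_conj.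
      by rewrite -[z]conjK ek conjO_mul // conj_int.
    exists (intO c); split; first exact: inO_int.
    by rewrite eN ec intO_mul mulrC.
  + exfalso; apply: np.
    have [u [v euv]] := Bezoutz p%:Z N.
    have g1 : gcdz p%:Z N = 1.
      rewrite /gcdz; apply/eqP; rewrite -[_ == _]/(coprime _ _).
      by rewrite prime_coprime // -dvdzE.
    rewrite g1 in euv.
    exists oneO; split; first exact: inO1.
    move=> w hw; pose W : OT D := exist _ w hw.
    pose ZB : OT D := exist _ (conjO z) hcz.
    pose U : OT D := exist _ (intO u) (inO_int D u).
    pose VV : OT D := exist _ (intO v) (inO_int D v).
    pose NN : OT D := exist _ (intO N) (inO_int D N).
    have e1 : Z * ZB = NN by apply: val_inj.
    have e2 : U * PP + VV * NN = 1.
      apply: val_inj; rewrite /= !intO_mul intO_add euv //.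
    split.
      by move=> _; exists w; split => //; rewrite mul1O.
    move=> _; exists (val (W * U)), (val (W * VV * ZB)).
    split; first exact: valP. split; first exact: valP.
    apply: (lift (a := W) (b := (W * U) * PP + (W * VV * ZB) * Z)).
    rewrite -[W in LHS]mulr1 -e2 -e1; ring.
Qed.
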